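(* Let $n\ge2$. Suppose there is an algorithm which, given $g,h\in H_n\rtimes S_n$, decides whether there exists $x\in H_n^*(g)$ with $x^{-1}gx=h$. Then there is an algorithm which, given $g,h\in H_n\rtimes S_n$, decides whether there exists $x\in H_n$ with $x^{-1}gx=h$.
   Context: $\mathbb{N}=\{1,2,\dots\}$, $X_n=\{1,\dots,n\}\times\mathbb{N}$, permutations act on the right. $H_n$ is the group of bijections $g$ of $X_n$ with $z_i(g)\in\mathbb{N}$, $t_i(g)\in\mathbb{Z}$ such that $(i,m)g=(i,m+t_i(g))$ for all $m\ge z_i(g)$. $S_n$ acts by $(i,m)\sigma=(i\sigma,m)$; $H_n\rtimes S_n\le\mathrm{Sym}(X_n)$ is generated by $H_n$ and these (elements given as words in a finite generating set); each $g$ is uniquely $\omega_g\sigma_g$ with $\omega_g\in H_n$, $\sigma_g\in S_n$, $t_i(g):=t_i(\omega_g)$. $[i]_g$ is the orbit of $i$ under $\langle\sigma_g\rangle$, $t_{[i]}(g)=\sum_{k\in[i]_g}t_k(g)$, $I(g)=\{i:t_{[i]}(g)\ne0\}$. With $|\sigma_g|$ the order of $\sigma_g$, $H_n^*(g)=\{x\in H_n: t_i(x)\equiv0\bmod\big||\sigma_g|\,t_{[i]}(g)\big| \text{ for all } i\in I(g)\}$. *)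

(* Defs.v *)
From mathcomp Require Import all_boot all_order all_algebra all_fingroup.
Set Implicit Arguments. Unset Strict Implicit. Unset Printing Implicit Defensive.
Import GRing.Theory Num.Theory.

(* Points of X_n: (i, m) with i : 'I_n (ray i+1 of the paper) and m : nat
   (the paper's m+1; the shift is harmless for all notions below).          *)
Definition pt (n : nat) := ('I_n * nat)%type.

(* Maps on X_n are written as functions; right action: (p)g = g p, so the
   product gh of the paper is the function h \o g. *)

(* f is eventually a translation with translation vector t:
   (i,m)f = (i, m + t i) for all m >= z_i (uniform z suffices). *)
Definition transl n (f : pt n -> pt n) (t : 'I_n -> int) : Prop :=
  exists z : nat, forall (i : 'I_n) (m : nat), (z <= m)%N ->
    (f (i, m)).1 = i /\ Posz (f (i, m)).2 = (Posz m + t i)%R.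

Definition in_H n (f : pt n -> pt n) : Prop :=
  bijective f /\ exists t, transl f t.

Definition sact n (s : 'S_n) (p : pt n) : pt n := (s p.1, p.2).

Definition HS_decomp n (g : pt n -> pt n) (w : pt n -> pt n) (s : 'S_n) : Prop :=
  in_H w /\ forall p, g p = sact s (w p).

Definition torb n (s : 'S_n) (tg : 'I_n -> int) (i : 'I_n) : int :=
  (\sum_(k in porbit s i) tg k)%R.

Definition in_Hstar n (g : pt n -> pt n) (x : pt n -> pt n) : Prop :=
  in_H x /\
  exists (w : pt n -> pt n) (s : 'S_n) (tg tx : 'I_n -> int),
    [/\ HS_decomp g w s, transl w tg, transl x tx &
        forall i : 'I_n, torb s tg i != 0%R ->
          ((Posz #[s]%g * torb s tg i)%R %| tx i)%Z].

Definition conj_to n (x g h : pt n -> pt n) : Prop :=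
  exists xi : pt n -> pt n,
    [/\ cancel x xi, cancel xi x & forall p, x (g (xi p)) = h p].

(* Generators: all sigma in S_n (inl sigma); inr false = the translation tr
   along the line ray0 ∪ ray1; inr true = the transposition of (0,0),(0,1). *)
Definition gen n := ('S_n + bool)%type.
Definition letter n := (gen n * bool)%type.  (* bool = inverse flag *)
Definition word n := seq (letter n).

Definition tr_f n (p : pt n) : pt n :=
  let: (i, m) := p in
  if val i == 0 then (i, m.+1)
  else if val i == 1 then (if m is m'.+1 then (i, m') else (insubd i 0, 0))
  else (i, m).

Definition tr_inv n (p : pt n) : pt n :=
  let: (i, m) := p in
  if val i == 0 then (if m is m'.+1 then (i, m') else (insubd i 1, 0))
  else if val i == 1 then (i, m.+1)
  else (i, m).

Definition sw_f n (p : pt n) : pt n :=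
  let: (i, m) := p in
  if val i == 0 then (if m == 0 then (i, 1) else if m == 1 then (i, 0) else (i, m))
  else (i, m).

Definition gen_fun n (a : gen n) (inv : bool) : pt n -> pt n :=
  match a with
  | inl s => if inv then sact s^-1 else sact s
  | inr false => if inv then @tr_inv n else @tr_f n
  | inr true => @sw_f n
  end.

Definition evalw n (w : word n) : pt n -> pt n :=
  fun p => foldl (fun q (l : letter n) => gen_fun l.1 l.2 q) p w.

Inductive prog : Type :=
| PZero
| PSucc
| PProj (i : nat)
| PComp (f : prog) (gs : seq prog)
| PPrec (f g : prog)
| PMin (f : prog).

Inductive eval : prog -> seq nat -> nat -> Prop :=
| ev_zero xs : eval PZero xs 0
| ev_succ x xs : eval PSucc (x :: xs) x.+1
| ev_proj i xs : (i < size xs)%N -> eval (PProj i) xs (nth 0 xs i)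
| ev_comp f gs xs ys y : evals gs xs ys -> eval f ys y -> eval (PComp f gs) xs y
| ev_prec0 f g xs y : eval f xs y -> eval (PPrec f g) (0 :: xs) y
| ev_precS f g k xs r y :
    eval (PPrec f g) (k :: xs) r -> eval g (k :: r :: xs) y ->
    eval (PPrec f g) (k.+1 :: xs) y
| ev_min f xs k :
    eval f (k :: xs) 0 ->
    (forall j, (j < k)%N -> exists2 r, (0 < r)%N & eval f (j :: xs) r) ->
    eval (PMin f) xs k
with evals : seq prog -> seq nat -> seq nat -> Prop :=
| evs_nil xs : evals [::] xs [::]
| evs_cons g gs xs y ys : eval g xs y -> evals gs xs ys -> evals (g :: gs) xs (y :: ys).

Definition code_letter n (l : letter n) : nat := val (enum_rank l).
Definition code_word n (w : word n) : nat :=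
  foldr (fun x c => 2 ^ x * (2 * c + 1)) 0 (map (@code_letter n) w).

Definition decidable2 n (P : word n -> word n -> Prop) : Prop :=
  exists e : prog, forall w1 w2 : word n,
    (P w1 w2 -> eval e [:: code_word w1; code_word w2] 1) /\
    (~ P w1 w2 -> eval e [:: code_word w1; code_word w2] 0).

(* Main.v *)
Require Import Defs.
From mathcomp Require Import all_boot all_order all_algebra all_fingroup.
From mathcomp Require Import zify.
From Stdlib Require Import Classical.
Set Implicit Arguments. Unset Strict Implicit. Unset Printing Implicit Defensive.

Module PartA.

Fixpoint cst (k : nat) : prog := match k with 0 => PZero | k'.+1 => PComp PSucc [:: cst k'] end.

Lemma ev_cst k xs : eval (cst k) xs k.
Proof.
elim: k => [|k IH] /=; first exact: ev_zero.
apply: ev_comp (evs_cons IH (evs_nil _)) _; exact: ev_succ.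
Qed.

Lemma ev_pr i xs y : nth 0 xs i = y -> (i < size xs)%N -> eval (PProj i) xs y.
Proof. by move=> <- h; apply: ev_proj. Qed.

Definition ADD := PPrec (PProj 0) (PComp PSucc [:: PProj 1]).
Lemma ev_add k y xs : eval ADD (k :: y :: xs) (k + y).
Proof.
elim: k => [|k IH]; first by apply: ev_prec0; apply: ev_pr.
apply: ev_precS IH _.
apply: ev_comp (evs_cons (ev_pr (i:=1) _ _) (evs_nil _)) _ => //.
by rewrite addSn; apply: ev_succ.
Qed.

Definition MUL := PPrec PZero (PComp ADD [:: PProj 1; PProj 2]).
Lemma ev_mul k y xs : eval MUL (k :: y :: xs) (k * y).
Proof.
elim: k => [|k IH]; first by apply: ev_prec0; apply: ev_zero.
apply: ev_precS IH _.
apply: ev_comp (evs_cons (ev_pr (i:=1) _ _) (evs_cons (ev_pr (i:=2) _ _) (evs_nil _))) _ => //.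
by rewrite mulSn addnC; apply: ev_add.
Qed.

Definition POW2 := PPrec (cst 1) (PComp MUL [:: cst 2; PProj 1]).
Lemma ev_pow2 k xs : eval POW2 (k :: xs) (2 ^ k).
Proof.
elim: k => [|k IH]; first by apply: ev_prec0; apply: ev_cst.
apply: ev_precS IH _.
apply: ev_comp (evs_cons (ev_cst _ _) (evs_cons (ev_pr (i:=1) _ _) (evs_nil _))) _ => //.
by rewrite expnS; apply: ev_mul.
Qed.

Definition FACT := PPrec (cst 1) (PComp MUL [:: PComp PSucc [:: PProj 0]; PProj 1]).
Lemma ev_fact k xs : eval FACT (k :: xs) (k`!).
Proof.
elim: k => [|k IH]; first by apply: ev_prec0; apply: ev_cst.
apply: ev_precS IH _.
apply: ev_comp (evs_cons (ev_comp (evs_cons (ev_pr (i:=0) _ _) (evs_nil _)) (ev_succ _ _))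
   (evs_cons (ev_pr (i:=1) _ _) (evs_nil _))) _ => //.
by rewrite factS; apply: ev_mul.
Qed.

Definition SG := PPrec PZero (cst 1).
Lemma ev_sg k xs : eval SG (k :: xs) (0 < k)%N.
Proof.
case: k => [|k]; first by apply: ev_prec0; apply: ev_zero.
have [r Hr] : exists r, eval SG (k :: xs) r.
  elim: k => [|k [r IH]]; first by exists 0; apply: ev_prec0; apply: ev_zero.
  by exists 1; apply: ev_precS IH (ev_cst _ _).
by apply: ev_precS Hr (ev_cst _ _).
Qed.

Definition PRED := PPrec PZero (PProj 0).
Lemma ev_pred k xs : eval PRED (k :: xs) k.-1.
Proof.
case: k => [|k]; first by apply: ev_prec0; apply: ev_zero.
have [r Hr] : exists r, eval PRED (k :: xs) r.
  elim: k => [|k [r IH]]; first by exists 0; apply: ev_prec0; apply: ev_zero.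
  by exists k; apply: ev_precS IH (ev_pr _ _).
by apply: ev_precS Hr (ev_pr _ _).
Qed.

Definition SUB := PPrec (PProj 0) (PComp PRED [:: PProj 1]).
Lemma ev_sub b a xs : eval SUB (b :: a :: xs) (a - b).
Proof.
elim: b => [|b IH]; first by apply: ev_prec0; apply: ev_pr => //; rewrite subn0.
apply: ev_precS IH _.
apply: ev_comp (evs_cons (ev_pr (i:=1) _ _) (evs_nil _)) _ => //.
by rewrite subnS; apply: ev_pred.
Qed.

Definition BITSF := PComp SUB [:: PComp POW2 [:: PProj 0]; PComp PSucc [:: PProj 1]].
Lemma ev_bitsf k x xs : eval BITSF (k :: x :: xs) (x.+1 - 2 ^ k).
Proof.
apply: ev_comp (evs_cons (ev_comp (evs_cons (ev_pr (i:=0) _ _) (evs_nil _)) (ev_pow2 _ _))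
   (evs_cons (ev_comp (evs_cons (ev_pr (i:=1) _ _) (evs_nil _)) (ev_succ _ _)) (evs_nil _))) _ => //.
exact: ev_sub.
Qed.

Definition BITS := PMin BITSF.
Lemma ev_bits x k xs : (x < 2 ^ k)%N -> (forall j, (j < k)%N -> 2 ^ j <= x)%N ->
  eval BITS (x :: xs) k.
Proof.
move=> h1 h2; apply: ev_min.
  by have := ev_bitsf k x xs; rewrite (eqP (_ : x.+1 - 2 ^ k == 0)) // subn_eq0.
move=> j /h2 hj; exists (x.+1 - 2 ^ j); last exact: ev_bitsf.
by rewrite subn_gt0 ltnS.
Qed.

End PartA.
Import PartA.

Module PartB.

Section Code.
Variable n : nat.
Definition Lw (w : word n) := sumn (map (fun l => (code_letter l).+1) w).

Lemma code_cons l (w : word n) : code_word (l :: w) = 2 ^ code_letter l * (2 * code_word w + 1).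
Proof. by []. Qed.

Lemma Lw_cons l (w : word n) : Lw (l :: w) = (code_letter l).+1 + Lw w.
Proof. by []. Qed.

Lemma code_cat (s1 s2 : word n) : code_word (s1 ++ s2) = code_word s1 + 2 ^ Lw s1 * code_word s2.
Proof.
elim: s1 => [|l s IH] /=; first by rewrite add0n mul1n.
rewrite !code_cons IH Lw_cons expnD expnS.
rewrite !mulnDr !mulnA; set c := code_word s; set d := code_word s2; set X := 2 ^ code_letter l; set Y := 2 ^ Lw s; nia.
Qed.

Lemma code_lt (w : word n) : (code_word w < 2 ^ Lw w)%N.
Proof.
elim: w => [|l s IH] //=; rewrite code_cons Lw_cons expnD expnS.
have : (1 <= 2 ^ code_letter l)%N by rewrite expn_gt0.
move: IH; set c := code_word s; set L := 2 ^ Lw s; set X := 2 ^ code_letter l; nia.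
Qed.

Lemma code_ge (w : word n) : (2 ^ Lw w <= (code_word w).*2.+1)%N.
Proof.
elim: w => [|l s IH] //=; rewrite code_cons Lw_cons expnD expnS.
move: IH; set c := code_word s; set L := 2 ^ Lw s; set X := 2 ^ code_letter l.
have : (1 <= X)%N by rewrite expn_gt0.
rewrite -!muln2; nia.
Qed.

Lemma size_code (w : word n) : (size w <= code_word w)%N.
Proof.
elim: w => [|l s IH] //=; rewrite code_cons.
have : (1 <= 2 ^ code_letter l)%N by rewrite expn_gt0.
move: IH; set c := code_word s; set X := 2 ^ code_letter l; nia.
Qed.

Lemma ev_bits_code (w : word n) xs : eval BITS (code_word w :: xs) (Lw w).
Proof.
apply: ev_bits; first exact: code_lt.
move=> j hj; have := code_ge w.
have : (2 ^ j.+1 <= 2 ^ Lw w)%N by rewrite leq_exp2l.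
rewrite expnS; set c := code_word w; lia.
Qed.

Definition STEP (v u : word n) :=
  PComp ADD [:: cst (code_word v); PComp MUL [:: cst (2 ^ Lw v);
     PComp ADD [:: PProj 0; PComp MUL [:: PComp POW2 [:: PComp BITS [:: PProj 0]];
        cst (code_word u)]]]].

Lemma ev_STEP v u (h : word n) xs :
  eval (STEP v u) (code_word h :: xs) (code_word (v ++ h ++ u)).
Proof.
rewrite !code_cat.
apply: ev_comp (evs_cons (ev_cst _ _) (evs_cons _ (evs_nil _))) (ev_add _ _ _).
apply: ev_comp (evs_cons (ev_cst _ _) (evs_cons _ (evs_nil _))) (ev_mul _ _ _).
apply: ev_comp (evs_cons (ev_pr (i:=0) _ _) (evs_cons _ (evs_nil _))) (ev_add _ _ _) => //.
apply: ev_comp (evs_cons _ (evs_cons (ev_cst _ _) (evs_nil _))) (ev_mul _ _ _).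
apply: ev_comp (evs_cons _ (evs_nil _)) (ev_pow2 _ _).
apply: ev_comp (evs_cons (ev_pr (i:=0) _ _) (evs_nil _)) (ev_bits_code _ _) => //.
Qed.

Definition ITER (v u : word n) := PPrec (PProj 0) (PComp (STEP v u) [:: PProj 1]).
Lemma ev_ITER v u (h : word n) a xs :
  eval (ITER v u) (a :: code_word h :: xs) (code_word (iter a (fun x => v ++ x ++ u) h)).
Proof.
elim: a => [|a IH]; first by apply: ev_prec0; apply: ev_pr.
apply: ev_precS IH _.
apply: ev_comp (evs_cons (ev_pr (i:=1) _ _) (evs_nil _)) (ev_STEP _ _ _ _) => //.
Qed.
End Code.

End PartB.
Import PartB.

Module PartC.

Section Lev.
Variable n : nat.
Variable e : prog.
Variable P1 : word n -> word n -> Prop.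
Hypothesis He : forall w1 w2 : word n,
    (P1 w1 w2 -> eval e [:: code_word w1; code_word w2] 1) /\
    (~ P1 w1 w2 -> eval e [:: code_word w1; code_word w2] 0).
Variable K : nat.

Definition BND := PComp FACT [:: PComp MUL [:: cst K; PProj 0]].

Fixpoint LEV (js : seq (word n * word n)) : prog :=
  match js with
  | [::] => e
  | (v, u) :: js' => PComp SG [:: PComp (PPrec PZero (PComp ADD [:: PProj 1;
        PComp (LEV js') [:: PProj 2; PComp (ITER v u) [:: PProj 0; PProj 3]]]))
      [:: BND; PProj 0; PProj 1]]
  end.

Fixpoint Qs (js : seq (word n * word n)) (g h : word n) : Prop :=
  match js with
  | [::] => P1 g h
  | (v, u) :: js' => exists2 a, (a < (K * code_word g)`!)%N &
       Qs js' g (iter a (fun x => v ++ x ++ u) h)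
  end.

Lemma ev_LEV js g h : exists b : bool,
  eval (LEV js) [:: code_word g; code_word h] b /\ (b <-> Qs js g h).
Proof.
elim: js h => [|[v u] js IH] h /=.
  case: (classic (P1 g h)) => H.
    by exists true; split => //; apply: (He g h).1.
  by exists false; split => //; apply: (He g h).2.
set SUMP := PPrec _ _.
have HS : forall k, exists s, eval SUMP [:: k; code_word g; code_word h] s /\
   ((0 < s)%N <-> exists2 a, (a < k)%N & Qs js g (iter a (fun x => v ++ x ++ u) h)).
  elim => [|k [s [Hs Hi]]].
    exists 0; split; first by apply: ev_prec0; apply: ev_zero.
    by split => // -[].
  have [b [Hb Hbi]] := IH (iter k (fun x => v ++ x ++ u) h).
  exists (s + b); split.
    apply: ev_precS Hs _.
    apply: ev_comp (evs_cons (ev_pr (i:=1) _ _) (evs_cons _ (evs_nil _))) (ev_add _ _ _) => //.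
    apply: ev_comp (evs_cons (ev_pr (i:=2) _ _) (evs_cons _ (evs_nil _))) Hb => //.
    apply: ev_comp (evs_cons (ev_pr (i:=0) _ _) (evs_cons (ev_pr (i:=3) _ _) (evs_nil _))) _ => //.
    exact: ev_ITER.
  split.
    rewrite addn_gt0 => /orP[/Hi [a ha Ha]|hb].
      by exists a => //; apply: ltnW.
    by exists k => //; apply/Hbi; case: b hb Hb Hbi.
  move=> [a]; rewrite ltnS leq_eqVlt => /orP[/eqP -> Hq|ha Hq].
    by have := (proj2 Hbi) Hq => ->; rewrite addn1.
  have hs : (0 < s)%N by apply/Hi; exists a.
  by rewrite addn_gt0 hs.
have [s [Hs Hi]] := HS ((K * code_word g)`!).
exists (0 < s)%N; split; last exact: Hi.
apply: ev_comp (evs_cons _ (evs_nil _)) (ev_sg _ _).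
apply: ev_comp _ Hs.
apply: evs_cons; last by apply: evs_cons (ev_pr (i:=0) _ _) (evs_cons (ev_pr (i:=1) _ _) (evs_nil _)).
apply: ev_comp (evs_cons _ (evs_nil _)) (ev_fact _ _).
by apply: ev_comp (evs_cons (ev_cst _ _) (evs_cons (ev_pr (i:=0) _ _) (evs_nil _))) (ev_mul _ _ _).
Qed.
End Lev.

End PartC.
Import PartC.

Module PartD.
Import GRing.Theory Num.Theory.
Local Open Scope ring_scope.

Section Transl.
Variable n : nat.
Implicit Types (f g : pt n -> pt n) (t : 'I_n -> int).

Lemma transl_ext f g t t' : f =1 g -> t =1 t' -> transl f t -> transl g t'.
Proof.
move=> efg et [z Hz]; exists z => i m hm; rewrite -efg -et; exact: Hz.
Qed.

Lemma absz_le_sum t i : (`|t i| <= \sum_j `|t j|)%N.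
Proof. by rewrite (bigD1 i) //= leq_addr. Qed.

Lemma transl_comp f g tf tg : transl f tf -> transl g tg ->
  transl (g \o f) (fun i => tf i + tg i).
Proof.
move=> [zf Hf] [zg Hg]; exists (zf + zg + \sum_j `|tf j|)%N => i m hm /=.
have hzf : (zf <= m)%N by move: hm; set S := (\sum_j _)%N; lia.
have [h1 h2] := Hf i m hzf.
have hle := absz_le_sum tf i.
case E: (f (i, m)) h1 h2 => [j m'] /= -> h2.
have hm' : (zg <= m')%N.
  have : (Posz zg <= Posz m')%R.
    rewrite h2; move: hm hle; set a := tf i; set S := (\sum_j _)%N; lia.
  by rewrite lez_nat.
have [h3 h4] := Hg i m' hm'; split => //; rewrite h4 h2; lia.
Qed.

Lemma transl_conj f tf (s : 'S_n) : transl f tf ->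
  transl (fun p => sact s^-1 (f (sact s p))) (fun i => tf (s i)).
Proof.
move=> [z Hz]; exists z => i m hm /=.
have [h1 h2] := Hz (s i) m hm.
by rewrite /sact /= h1 permK.
Qed.

Lemma transl_iter f tf a : transl f tf -> transl (iter a f) (fun i => tf i *+ a).
Proof.
move=> H; elim: a => [|a IH].
  by exists 0%N => i m _ /=; rewrite addr0.
apply: transl_ext (transl_comp IH H) => // i; by rewrite mulrSr.
Qed.

Lemma inH_comp f g : in_H f -> in_H g -> in_H (g \o f).
Proof.
move=> [bf [tf Hf]] [bg [tg Hg]]; split; first exact: bij_comp.
by exists (fun i => tf i + tg i); apply: transl_comp.
Qed.

Lemma inH_ext f g : f =1 g -> in_H f -> in_H g.
Proof.
move=> e [[fi c1 c2] [t Ht]]; split; last by exists t; apply: transl_ext Ht.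
by exists fi => x; rewrite -?e //= ?c1 ?c2 //; rewrite -e c2.
Qed.

Lemma sactK (s : 'S_n) : cancel (sact s) (sact s^-1).
Proof. by move=> [i m]; rewrite /sact /= permK. Qed.
Lemma sactKV (s : 'S_n) : cancel (sact s^-1) (sact s).
Proof. by move=> [i m]; rewrite /sact /= permKV. Qed.
Lemma sactM (s r : 'S_n) p : sact r (sact s p) = sact (s * r) p.
Proof. by case: p => i m; rewrite /sact /= permM. Qed.

Lemma inH_conj f (s : 'S_n) : in_H f -> in_H (fun p => sact s^-1 (f (sact s p))).
Proof.
move=> [[fi c1 c2] [t Ht]]; split; last by exists (fun i => t (s i)); apply: transl_conj.
exists (fun p => sact s^-1 (fi (sact s p))) => p.
  by rewrite sactKV c1 sactK.
by rewrite sactKV c2 sactK.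
Qed.
End Transl.

Section Gens.
Variable n : nat.
Hypothesis hn : (2 <= n)%N.

Definition ttr (i : 'I_n) : int := if val i == 0%N then 1 else if val i == 1%N then -1 else 0.

Lemma tr_Ki : cancel (@tr_inv n) (@tr_f n).
Proof.
have h0' : (0 < n)%N by apply: leq_trans hn.
move=> [[[|[|k]] hk] [|m]] //=.
- rewrite insubdK //=; congr (_,_); apply: val_inj; by rewrite insubdK.
Qed.
Lemma tr_K : cancel (@tr_f n) (@tr_inv n).
Proof.
have h0' : (0 < n)%N by apply: leq_trans hn.
move=> [[[|[|k]] hk] [|m]] //=.
- rewrite insubdK //=; congr (_,_); apply: val_inj; by rewrite insubdK.
Qed.
Lemma sw_K : cancel (@sw_f n) (@sw_f n).
Proof. by move=> [[[|k] hk] [|[|m]]]. Qed.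

Lemma transl_tr : transl (@tr_f n) ttr.
Proof.
exists 1%N; move=> [[|[|k]] hk] [|m] // _ /=; rewrite /ttr /=; split => //.
- by rewrite -addn1.
- by rewrite -addn1 PoszD addrK.
- by rewrite addr0.
Qed.

Lemma transl_trinv : transl (@tr_inv n) (fun i => - ttr i).
Proof.
exists 1%N; move=> [[|[|k]] hk] [|m] // _ /=; rewrite /ttr /=; split => //.
- by rewrite -addn1 PoszD addrK.
- by rewrite opprK -addn1.
- by rewrite oppr0 addr0.
Qed.

Lemma transl_sw : transl (@sw_f n) (fun _ => 0).
Proof.
by exists 2%N; move=> [[|k] hk] [|[|m]] // _ /=; rewrite addr0.
Qed.
End Gens.

End PartD.
Import PartD.

Module PartE.
Import GRing.Theory Num.Theory.
Local Open Scope ring_scope.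

Section Decomp.
Variable n : nat.
Hypothesis hn : (2 <= n)%N.

Lemma evalw_rcons (u : word n) l p : evalw (rcons u l) p = gen_fun l.1 l.2 (evalw u p).
Proof. by rewrite /evalw foldl_rcons. Qed.
Lemma evalw_cat (u v : word n) p : evalw (u ++ v) p = evalw v (evalw u p).
Proof. by rewrite /evalw foldl_cat. Qed.

Lemma inH_can f fi t : cancel f fi -> cancel fi f -> transl f t -> @in_H n f.
Proof. by move=> c1 c2 Ht; split; [exists fi | exists t]. Qed.

Lemma gen_H c b : exists t, in_H (gen_fun (n:=n) (inr c) b) /\
   transl (gen_fun (n:=n) (inr c) b) t /\ forall i, (`|t i| <= 1)%N.
Proof.
have bt : forall i : 'I_n, (`|ttr i| <= 1)%N by move=> i; rewrite /ttr; case: ifP => //; case: ifP.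
case: c; case: b => /=.
- exists (fun _ => 0); split; first exact: inH_can (@sw_K n) (@sw_K n) (@transl_sw n).
  by split => //; apply: transl_sw.
- exists (fun _ => 0); split; first exact: inH_can (@sw_K n) (@sw_K n) (@transl_sw n).
  by split => //; apply: transl_sw.
- exists (fun i => - ttr i); split; first exact: inH_can (tr_Ki hn) (tr_K hn) (@transl_trinv n).
  by split => //; [apply: transl_trinv | move=> i; rewrite abszN].
- exists (@ttr n); split; first exact: inH_can (tr_K hn) (tr_Ki hn) (@transl_tr n).
  by split => //; apply: transl_tr.
Qed.

Lemma inH_id : @in_H n id.
Proof. by apply: (inH_can (fi := id) (t := fun _ => 0)) => //; exists 0%N => i m _; rewrite addr0. Qed.

Lemma decomp (g : word n) : exists w s tg, [/\ HS_decomp (evalw g) w s, transl w tg &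
   forall i, (`|tg i| <= size g)%N].
Proof.
elim/last_ind: g => [|u l [w [s [tg [[Hw Hws] Htg Hb]]]]].
  exists id, 1%g, (fun _ => 0); split => //.
  - split; first exact: inH_id.
    by move=> [i m]; rewrite /sact /= perm1.
  - by exists 0%N => i m _; rewrite addr0.
case: l => [[sg|c] b].
  exists w, (s * (if b then sg^-1 else sg))%g, tg; split => //; last first.
    by move=> i; rewrite size_rcons (leq_trans (Hb i)).
  split => // p; rewrite evalw_rcons Hws -sactM /=.
  by case: b.
have [tf [Hf [Htf Hbf]]] := gen_H c b.
exists ((fun p => sact s^-1 (gen_fun (inr c) b (sact s p))) \o w), s,
       (fun i => tg i + tf (s i)); split.
- split; first by apply: inH_comp Hw (inH_conj s Hf).
  by move=> p; rewrite evalw_rcons Hws /= sactKV.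
- exact: transl_comp Htg (transl_conj s Htf).
- move=> i; rewrite size_rcons; have := Hb i; have := Hbf (s i).
  set a := tg i; set d := tf (s i); lia.
Qed.
End Decomp.

End PartE.
Import PartE.

Module PartF.
Import Order.TTheory GRing.Theory Num.Theory.

Lemma sum_lt_cnt K b : (\sum_(m < K) (m < b)%N = minn b K)%N.
Proof.
elim: K => [|K IH]; first by rewrite big_ord0 minn0.
rewrite big_ord_recr /= IH; case: (ltnP K b) => h /=; lia.
Qed.

Lemma card_pairs n K (S : {set 'I_n * 'I_K}) :
  #|S| = (\sum_(i < n) \sum_(m < K) ((i, m) \in S))%N.
Proof.
rewrite -sum1_card big_mkcond /= pair_big /=.
by apply: eq_bigr => -[i m] _ /=; case: ((i, m) \in S).
Qed.

Section SumZero.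
Variable n : nat.

Lemma sum_zero (f : pt n -> pt n) t : in_H f -> transl f t -> (\sum_i t i = 0)%R.
Proof.
move=> [[fi c1 c2] _] [z Hz].
set S := (\sum_i `|t i|)%N.
set N := (z + S)%N.
have hS : forall i, (`|t i| <= S)%N by move=> i; apply: absz_le_sum.
have F1 : forall (i : 'I_n) m, (m < N)%N -> (Posz (f (i, m)).2 < Posz N + t (f (i, m)).1)%R.
  move=> i m hm; case E: (f (i, m)) => [j m'] /=.
  rewrite ltNge; apply/negP => hle.
  have hj := hS j.
  set m'' := `|(Posz m' - t j)%R|%N.
  have e1 : Posz m'' = (Posz m' - t j)%R by rewrite /m''; apply: gez0_abs; move: hle hj; lia.
  have hz : (z <= m'')%N by move: e1 hle hj; rewrite /N; lia.
  have [h1 h2] := Hz j m'' hz.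
  have : f (j, m'') = f (i, m).
    rewrite E; case E2: (f (j, m'')) h1 h2 => [a b] /= -> h2; congr (_, _).
    by apply/eqP; rewrite -eqz_nat h2 e1 addrNK.
  move/(can_inj c1) => [_ em]; move: e1 hle hj hm; rewrite em /N; lia.
have F2 : forall j m', (Posz m' < Posz N + t j)%R -> ((fi (j, m')).2 < N)%N.
  move=> j m' hlt; case E: (fi (j, m')) => [i m] /=.
  rewrite ltnNge; apply/negP => hm.
  have hz : (z <= m)%N by move: hm; rewrite /N; lia.
  have [h1 h2] := Hz i m hz.
  have := c2 (j, m'); rewrite E; case E2: (f (i, m)) h1 h2 => [a b] /= -> h2 [ej eb].
  move: hlt hm; rewrite -ej -eb h2 /N; lia.
set K := (N + S).+1.
pose phi (p : 'I_n * 'I_K) : 'I_n * 'I_K :=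
  ((f (p.1, val p.2)).1, inord (f (p.1, val p.2)).2).
pose A := [set p : 'I_n * 'I_K | (val p.2 < N)%N].
pose Bs := [set p : 'I_n * 'I_K | (Posz (val p.2) < Posz N + t p.1)%R].
have bnd : forall i m, (m < N)%N -> ((f (i, m)).2 < K)%N.
  move=> i m hm; have := F1 i m hm; have := hS (f (i, m)).1.
  rewrite /K; set j := (f (i, m)).1; set m' := (f (i, m)).2; lia.
have inj : {in A &, injective phi}.
  move=> [i1 m1] [i2 m2]; rewrite !inE /= => h1 h2 [e1 e2].
  have e2' : (f (i1, val m1)).2 = (f (i2, val m2)).2.
    have := congr1 val e2; rewrite /= !inordK ?bnd //.
  have : f (i1, val m1) = f (i2, val m2).
    by move: e1 e2'; case: (f (i1, _)) => ??; case: (f (i2, _)) => ?? /= -> ->.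
  by move/(can_inj c1) => [-> /val_inj ->].
have img : phi @: A = Bs.
  apply/setP => p; apply/imsetP/idP.
    move=> [q]; rewrite inE => hq ->; rewrite inE /phi /=.
    rewrite (@inordK _ (f (q.1, val q.2)).2) ?bnd //; exact: F1.
  rewrite inE => hp.
  have hr := F2 _ _ hp.
  have hrK : ((fi (p.1, val p.2)).2 < K)%N by apply: (leq_trans hr); rewrite /K; apply: leq_trans (leq_addr _ _) (leqnSn _).
  exists ((fi (p.1, val p.2)).1, inord (fi (p.1, val p.2)).2).
    by rewrite inE /= inordK.
  rewrite /phi /= inordK // -surjective_pairing c2 /=.
  by case: p hp {hr hrK} => i m /=; rewrite inord_val.
have ecard : #|A| = #|Bs| by rewrite -img card_in_imset.
pose b i := `|(Posz N + t i)%R|%N.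
have hb : forall i, Posz (b i) = (Posz N + t i)%R.
  move=> i; rewrite /b gez0_abs //; have := hS i; rewrite /N; lia.
have cA : #|A| = (n * N)%N.
  rewrite card_pairs.
  under eq_bigr => i _ do under eq_bigr => m _ do rewrite inE /=.
  have eqN : minn N K = N by rewrite /K; lia.
  under eq_bigr => i _ do rewrite sum_lt_cnt eqN.
  by rewrite sum_nat_const card_ord.
have cB : #|Bs| = (\sum_i b i)%N.
  rewrite card_pairs; apply: eq_bigr => i _.
  have -> : (\sum_(m < K) ((i, m) \in Bs) = \sum_(m < K) (val m < b i))%N.
    apply: eq_bigr => m _; rewrite inE /= -hb; lia.
  rewrite sum_lt_cnt; have := hb i; have := hS i; rewrite /K /N; lia.
have : Posz (\sum_i b i) = Posz (n * N) by rewrite -cB -cA ecard.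
rewrite (big_morph Posz PoszD (erefl _)) (eq_bigr _ (fun i _ => hb i)) big_split /=.
rewrite sumr_const card_ord.
have -> : ((Posz N) *+ n)%R = Posz (n * N) by lia.
by rewrite -[X in _ = X -> _]addr0 => /addrI.
Qed.
End SumZero.

End PartF.
Import PartF.

Module PartG.
Import Order.TTheory GRing.Theory Num.Theory.

Lemma iter_can T (f fi : T -> T) a : cancel f fi -> cancel (iter a f) (iter a fi).
Proof.
move=> c; elim: a => [|a IH] x //.
by rewrite iterSr iterS c IH.
Qed.

Section Main.
Variable n : nat.
Hypothesis hn : (2 <= n)%N.

Definition i1 : 'I_n := Ordinal hn.
Definition tp (j : 'I_n) : 'S_n := tperm i1 j.
Definition uw (j : 'I_n) : word n := [:: (inl (tp j), false); (inr false, false); (inl (tp j), true)].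
Definition vw (j : 'I_n) : word n := [:: (inl (tp j), false); (inr false, true); (inl (tp j), true)].
Definition Tm j := evalw (uw j).
Definition Tim j := evalw (vw j).

Lemma Tm_eq j p : Tm j p = sact (tp j)^-1 (tr_f (sact (tp j) p)).
Proof. by []. Qed.
Lemma Tim_eq j p : Tim j p = sact (tp j)^-1 (tr_inv (sact (tp j) p)).
Proof. by []. Qed.
Lemma Tm_K j : cancel (Tm j) (Tim j).
Proof. by move=> p; rewrite Tm_eq Tim_eq sactKV (tr_K hn) sactK. Qed.
Lemma Tim_K j : cancel (Tim j) (Tm j).
Proof. by move=> p; rewrite Tm_eq Tim_eq sactKV (tr_Ki hn) sactK. Qed.

Definition tT j i : int := ttr (tp j i).

Lemma transl_Tm j : transl (Tm j) (tT j).
Proof. apply: transl_ext (transl_conj _ (@transl_tr n)) => // p; by rewrite Tm_eq. Qed.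
Lemma transl_Tim j : transl (Tim j) (fun i => - tT j i)%R.
Proof. apply: transl_ext (transl_conj _ (@transl_trinv n)) => // p; by rewrite Tim_eq. Qed.

Lemma tT_j j : tT j j = (-1)%R.
Proof. by rewrite /tT /tp tpermR /ttr /=. Qed.

Lemma tT_0 j i : val j != 0%N -> val i != 0%N -> i != j -> tT j i = 0%R.
Proof.
move=> hj hi hij; rewrite /tT /tp.
have [e1|ne1] := eqVneq i1 i.
  rewrite -e1 tpermL /ttr (negbTE hj).
  have -> : (val j == 1%N) = false.
    apply/negbTE; apply: contra hij => /eqP h; apply/eqP/val_inj; rewrite -e1 h.
    by [].
  by [].
rewrite tpermD // 1?eq_sym // /ttr (negbTE hi).
have -> : (val i == 1%N) = false.
  by apply/negbTE; apply: contra ne1 => /eqP h; apply/eqP/val_inj; rewrite h.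
by [].
Qed.

Definition conjw j (h : word n) := vw j ++ h ++ uw j.

Lemma evalw_iter j a (h : word n) p :
  evalw (iter a (conjw j) h) p = iter a (Tm j) (evalw h (iter a (Tim j) p)).
Proof.
elim: a p => [|a IH] p //.
rewrite iterS /conjw !evalw_cat IH iterS iterSr //.
Qed.

End Main.

End PartG.
Import PartG.

Module PartH.
Import Order.TTheory GRing.Theory Num.Theory.

Section Final.
Variable n : nat.
Hypothesis hn : (2 <= n)%N.

Definition P1 (g h : word n) := exists x, in_Hstar (evalw g) x /\ conj_to x (evalw g) (evalw h).
Definition P2 (g h : word n) := exists x, in_H x /\ conj_to x (evalw g) (evalw h).
Definition K0 := (n`! * n)%N.
Definition pr (j : 'I_n) := (vw hn j, uw hn j).

Lemma inH_iterTim j a : in_H (iter a (Tim hn j)).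
Proof.
split; first by exists (iter a (Tm hn j)); apply: iter_can; [apply: Tim_K | apply: Tm_K].
by eexists; apply: transl_iter (transl_Tim hn j).
Qed.

Lemma back (g : word n) jl h : Qs P1 K0 (map pr jl) g h -> P2 g h.
Proof.
elim: jl h => [|j jl IH] h /=.
  by move=> [x [[Hx _] Hc]]; exists x.
move=> [a ha /IH [x' [Hx' [xi' [c1 c2 Hc]]]]].
exists (iter a (Tim hn j) \o x'); split; first exact: inH_comp Hx' (inH_iterTim j a).
exists (xi' \o iter a (Tm hn j)); split.
- move=> p /=; rewrite (iter_can _ (Tim_K hn j)) c1 //.
- move=> p /=; rewrite c2 (iter_can _ (Tm_K hn j)) //.
- move=> p /=; rewrite Hc evalw_iter !(iter_can _ (Tm_K hn j)) //.
Qed.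

Definition Pg (g : word n) := (K0 * code_word g)`!.

Lemma torb_bound (s : 'S_n) tg (g : word n) i :
  (forall k, (`|tg k| <= size g)%N) -> (`|torb s tg i| <= n * size g)%N.
Proof.
move=> hb.
have h1 : (Posz `|torb s tg i| <= \sum_(k in porbit s i) Posz `|tg k|)%R.
  rewrite abszE (eq_bigr (fun k => `|tg k|%R)); first exact: ler_norm_sum.
  by move=> k _; rewrite abszE.
have h2 : (\sum_(k in porbit s i) Posz `|tg k| <= \sum_k Posz `|tg k|)%R.
  rewrite big_mkcond /=; apply: ler_sum => k _; case: (k \in _) => //.
have h3 : (\sum_k Posz `|tg k| <= \sum_(k : 'I_n) Posz (size g))%R.
  by apply: ler_sum => k _; rewrite lez_nat.
move: h3; rewrite sumr_const card_ord => h3.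
have := le_trans h1 (le_trans h2 h3); lia.
Qed.

Lemma order_le (s : 'S_n) : (#[s]%g <= n`!)%N.
Proof. by rewrite -card_Sn max_card. Qed.

Lemma base (g h : word n) x tx : in_H x -> transl x tx -> conj_to x (evalw g) (evalw h) ->
  (forall i, val i != 0%N -> (Posz (Pg g) %| tx i)%Z) -> P1 g h.
Proof.
move=> Hx Htx Hc Hdiv.
have all : forall i, (Posz (Pg g) %| tx i)%Z.
  move=> i; case: (boolP (val i == 0%N)) => hi; last exact: Hdiv.
  have := sum_zero Hx Htx; rewrite (bigD1 i) //= => /eqP; rewrite addr_eq0 => /eqP ->.
  rewrite rpredN; apply: rpred_sum => k hk; apply: Hdiv.
  apply: contra hk => /eqP hk0; apply/eqP/val_inj; rewrite hk0; exact/esym/eqP.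
have [w [s [tg [HS Htg Hb]]]] := decomp hn g.
exists x; split => //; split => //; exists w, s, tg, tx; split => // i hi.
apply: dvdz_trans (all i); rewrite dvdzE abszM /=.
apply: dvdn_fact; apply/andP; split.
  by rewrite muln_gt0 order_gt0 absz_gt0.
have := torb_bound s i Hb; have := order_le s; have := size_code g.
rewrite /K0; set o := #[s]%g; set T := `|torb s tg i|%N; set c := code_word g.
move=> h1 h2 h3; rewrite -mulnA; apply: leq_mul => //.
apply: leq_trans h3 _; exact: leq_mul.
Qed.

Lemma inH_iterTm j a : in_H (iter a (Tm hn j)).
Proof.
split; first by exists (iter a (Tim hn j)); apply: iter_can; [apply: Tm_K | apply: Tim_K].
by eexists; apply: transl_iter (transl_Tm hn j).
Qed.

Lemma forth (g : word n) jl : all (fun j : 'I_n => val j != 0%N) jl ->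
  forall h x tx, in_H x -> transl x tx -> conj_to x (evalw g) (evalw h) ->
  (forall i, val i != 0%N -> i \notin jl -> (Posz (Pg g) %| tx i)%Z) ->
  Qs P1 K0 (map pr jl) g h.
Proof.
elim: jl => [|j jl IH] /=.
  by move=> _ h x tx Hx Htx Hc Hdiv; apply: (base Hx Htx Hc) => i hi; apply: Hdiv.
move=> /andP [hj hall] h x tx Hx Htx [xi [c1 c2 Hc]] Hdiv.
have Pgt0 : (0 < Pg g)%N by rewrite /Pg fact_gt0.
set a := `|(tx j %% Posz (Pg g))%Z|%N.
have ea : Posz a = (tx j %% Posz (Pg g))%Z.
  by rewrite /a gez0_abs // modz_ge0 // eqz_nat -lt0n.
exists a.
  have : ((tx j %% Posz (Pg g))%Z < Posz (Pg g))%R by apply: ltz_pmod; rewrite ltz_nat.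
  by rewrite -ea ltz_nat.
apply: (IH hall _ (iter a (Tm hn j) \o x) (fun i => tx i + tT hn j i *+ a)%R).
- exact: inH_comp Hx (inH_iterTm j a).
- exact: transl_comp Htx (transl_iter _ (transl_Tm hn j)).
- exists (xi \o iter a (Tim hn j)); split.
  + by move=> p /=; rewrite (iter_can _ (Tm_K hn j)) c1.
  + by move=> p /=; rewrite c2 (iter_can _ (Tim_K hn j)).
  + move=> p /=; rewrite Hc.
    exact: (esym (evalw_iter hn j a h p)).
- move=> i hi hin; case: (eqVneq i j) => [->|hij].
    rewrite tT_j.
    have -> : ((-1 : int) *+ a = - Posz a)%R by lia.
    rewrite ea {1}(divz_eq (tx j) (Posz (Pg g))) addrK.
    by apply: dvdz_mull; apply: dvdzz.
  rewrite tT_0 // mul0rn addr0; apply: Hdiv => //.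
  by rewrite in_cons negb_or hij.
Qed.
End Final.

Theorem lemma4p11_aux (n : nat) (hn : (2 <= n)%N) :
  decidable2 (fun g h : word n =>
    exists x, in_Hstar (evalw g) x /\ conj_to x (evalw g) (evalw h)) ->
  decidable2 (fun g h : word n =>
    exists x, in_H x /\ conj_to x (evalw g) (evalw h)).
Proof.
move=> [e He].
set jl0 := [seq j <- enum 'I_n | val j != 0%N].
exists (LEV e (K0 n) (map (pr hn) jl0)) => w1 w2.
have [b [Hb Hbi]] := ev_LEV (P1:=@P1 n) He (K0 n) (map (pr hn) jl0) w1 w2.
split.
  move=> [x [Hx Hc]].
  have := Hx => -[_ [tx Htx]].
  have HQ : Qs (@P1 n) (K0 n) (map (pr hn) jl0) w1 w2.
    apply: (forth (tx := tx) _ _ Hx Htx Hc).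
      by apply/allP => j; rewrite mem_filter => /andP[].
    by move=> i hi; rewrite mem_filter hi mem_enum.
  by have := proj2 Hbi HQ => hb; rewrite hb in Hb.
move=> nP.
case: b Hb Hbi => // _ Hbi.
by exfalso; apply: nP; apply: (back (jl := jl0)); apply/Hbi.
Qed.

End PartH.
Import PartH.

Theorem lemma4p11 (n : nat) (hn : (2 <= n)%N) :
  decidable2 (fun g h : word n =>
    exists x, in_Hstar (evalw g) x /\ conj_to x (evalw g) (evalw h)) ->
  decidable2 (fun g h : word n =>
    exists x, in_H x /\ conj_to x (evalw g) (evalw h)).
Proof. exact: lemma4p11_aux. Qed.
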